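(* Let $h$ be a positive integer and $L$ an $h$-modular lattice with zero. For every $x\in\mathcal{A}'$ and every integer $k\geq d(x)$, $x^{(k)}=x^{(d(x))}$.
   Context: $K$ is the lattice consisting of $\varnothing$, $C=\{c\}$, $A_m=\{a_k:k\geq m\}$, $B_n=\{b_k:k\geq n\}$ ($m,n<\omega$), and $C\cup A_m\cup B_n$ with $|m-n|\leq1$, ordered by inclusion; $a_n,b_n,c$ denote $A_n,B_n,C$, so $\mathrm{J}(K)=\{c\}\cup\{a_n\}\cup\{b_n\}$ with $a_0>a_1>\cdots$, $b_0>b_1>\cdots$ and no other comparabilities. $\mathcal{A}$ is the set of antitone maps $x\colon\mathrm{J}(K)\to L$ with finite range. For $x\in\mathcal{A}$, $x(a_\infty)$, $x(b_\infty)$ are the eventual values of the increasing sequences $(x(a_n))$, $(x(b_n))$, and $d(x)$ is the least $d\geq0$ with $x(a_n)=x(a_\infty)$ and $x(b_n)=x(b_\infty)$ for all $n\geq d$. The map $x^{(1)}$ is defined by $x^{(1)}(c)=x(c)\vee(x(a_\infty)\wedge x(b_\infty))$, $x^{(1)}(a_0)=x(a_0)$, $x^{(1)}(b_0)=x(b_0)$, $x^{(1)}(a_{n+1})=x(a_{n+1})\vee(x(b_n)\wedge x(c))$, $x^{(1)}(b_{n+1})=x(b_{n+1})\vee(x(a_n)\wedge x(c))$; $\mathcal{A}$ is closed under $x\mapsto x^{(1)}$, and $x^{(0)}=x$, $x^{(k+1)}=(x^{(k)})^{(1)}$. Put $\ell(x)=\langle x(a_\infty),x(b_\infty),x(c)\rangle$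 and $\mathcal{A}'=\{x\in\mathcal{A}:\ell(x^{(1)})=\ell(x)\}$. $L$ is $h$-modular if $u^{(h+1)}=u^{(h)}$ for all $u\in L^3$, where $\langle x,y,z\rangle^{(1)}=\langle x\vee(y\wedge z),y\vee(x\wedge z),z\vee(x\wedge y)\rangle$. *)

(* Defs.v *)
From Stdlib Require Import ClassicalEpsilon.
From mathcomp Require Import all_boot all_order.
Set Implicit Arguments. Unset Strict Implicit. Unset Printing Implicit Defensive.
Import Order.TTheory.
Local Open Scope order_scope.

Inductive JK : Type := Jc | Ja of nat | Jb of nat.

(* order on J(K): a_0 > a_1 > ..., b_0 > b_1 > ..., no other comparabilities *)
Definition leJK (p q : JK) : bool :=
  match p, q with
  | Jc, Jc => true
  | Ja m, Ja n => (n <= m)%N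
  | Jb m, Jb n => (n <= m)%N
  | _, _ => false
  end.

Section Defs.
Context {disp : Order.disp_t} {L : bLatticeType disp}.

Definition inA (x : JK -> L) : Prop :=
  (forall p q, leJK p q -> x q <= x p) /\ (exists s : seq L, forall j, x j \in s).

Definition ainf (x : JK -> L) : L :=
  epsilon (inhabits \bot) (fun v => exists N, forall n, (N <= n)%N -> x (Ja n) = v).
Definition binf (x : JK -> L) : L :=
  epsilon (inhabits \bot) (fun v => exists N, forall n, (N <= n)%N -> x (Jb n) = v).

Definition stableFrom (x : JK -> L) (d : nat) : Prop :=
  forall n, (d <= n)%N -> x (Ja n) = ainf x /\ x (Jb n) = binf x.

Definition dx (x : JK -> L) : nat :=
  epsilon (inhabits 0%N) (fun d => stableFrom x d /\ forall d', stableFrom x d' -> (d <= d')%N).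

Definition step (x : JK -> L) : JK -> L := fun j =>
  match j with
  | Jc => x Jc `|` (ainf x `&` binf x)
  | Ja 0 => x (Ja 0)
  | Jb 0 => x (Jb 0)
  | Ja n.+1 => x (Ja n.+1) `|` (x (Jb n) `&` x Jc)
  | Jb n.+1 => x (Jb n.+1) `|` (x (Ja n) `&` x Jc)
  end.

Definition iterx (k : nat) (x : JK -> L) : JK -> L := iter k step x.

Definition ell (x : JK -> L) : L * L * L := (ainf x, binf x, x Jc).

Definition inA' (x : JK -> L) : Prop := inA x /\ ell (step x) = ell x.

Definition step3 (u : L * L * L) : L * L * L :=
  let: (x, y, z) := u in
  (x `|` (y `&` z), y `|` (x `&` z), z `|` (x `&` y)).

Definition hmodular (h : nat) : Prop :=
  forall u : L * L * L, iter h.+1 step3 u = iter h step3 u.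

End Defs.

(* Main.v *)
Require Import Defs.
From mathcomp Require Import all_boot all_order.
From mathcomp Require Import zify.
From Stdlib Require Import Lia ClassicalEpsilon FunctionalExtensionality Classical.
Set Implicit Arguments. Unset Strict Implicit. Unset Printing Implicit Defensive.
Import Order.TTheory.

Section Proofs.
Context {disp : Order.disp_t} {L : bLatticeType disp}.
Implicit Types (y : JK -> L).
Local Open Scope order_scope.

Lemma ainf_char y N v : (forall n, (N <= n)%N -> y (Ja n) = v) -> ainf y = v.
Proof.
move=> H. rewrite /ainf.
have ex : exists v, exists N, forall n, (N <= n)%N -> y (Ja n) = v by exists v, N.
have [N' HN'] := epsilon_spec (inhabits \bot) _ ex.
by rewrite -(HN' (maxn N N')) ?leq_maxr // H // leq_maxl.
Qed.

Lemma binf_char y N v : (forall n, (N <= n)%N -> y (Jb n) = v) -> binf y = v.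
Proof.
move=> H. rewrite /binf.
have ex : exists v, exists N, forall n, (N <= n)%N -> y (Jb n) = v by exists v, N.
have [N' HN'] := epsilon_spec (inhabits \bot) _ ex.
by rewrite -(HN' (maxn N N')) ?leq_maxr // H // leq_maxl.
Qed.

Lemma count_lt (T : eqType) (p q : pred T) (s : seq T) :
  (forall w, p w -> q w) -> forall z, z \in s -> q z -> ~~ p z ->
  (count p s < count q s)%N.
Proof.
move=> pq z; elim: s => // a s IH; rewrite inE => /orP [/eqP<- | zs] qz pz /=.
  by rewrite (negbTE pz) qz add0n add1n ltnS; apply: sub_count; exact pq.
have := IH zs qz pz.
move: (pq a); case: (p a); case: (q a) => //= pqa h; first [lia | by case: (pqa isT)].
Qed.

Lemma stab (f : nat -> L) (s : seq L) :
  (forall m n, (m <= n)%N -> f m <= f n) -> (forall n, f n \in s) ->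
  exists N, forall n, (N <= n)%N -> f n = f N.
Proof.
move=> mono ins.
suff H : forall m N, (count (fun w => (f N <= w)%O) s <= m)%N ->
    exists N', forall n, (N' <= n)%N -> f n = f N'.
  exact: (H _ 0%N (leqnn _)).
elim=> [|m IH] N hc.
  have : (0 < count (fun w => (f N <= w)%O) s)%N.
    by rewrite -has_count; apply/hasP; exists (f N).
  by move: hc; rewrite leqn0 => /eqP ->.
case: (classic (forall n, (N <= n)%N -> f n = f N)) => [h|]; first by exists N.
move=> H0. have [n Hn] := not_all_ex_not _ _ H0. have [Nn neq] := imply_to_and _ _ Hn.
apply: (IH n). rewrite -ltnS. apply: leq_trans hc.
apply: (@count_lt _ _ _ _ _ (f N)) => //.
  move=> w /= h; exact: le_trans (mono _ _ Nn) h.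
rewrite /=; apply/negP => h; apply: neq; apply/eqP; by rewrite eq_le h mono.
Qed.

Lemma ex_min (P : nat -> Prop) :
  (exists n, P n) -> exists n, P n /\ forall m, P m -> (n <= m)%N.
Proof.
move=> [n Pn].
pose b := fun k => if excluded_middle_informative (P k) then true else false.
have bP k : b k = true <-> P k.
  by rewrite /b; case: excluded_middle_informative => //; split.
have ex : exists k, b k by exists n; apply/bP.
case: (ex_minnP ex) => m bm mmin; exists m; split; first by apply/bP.
by move=> k Pk; apply: mmin; apply/bP.
Qed.

Variable x : JK -> L.
Hypothesis hx : inA' x.

Lemma monoA m n : (m <= n)%N -> x (Ja m) <= x (Ja n).
Proof. by move=> h; apply: hx.1.1. Qed.
Lemma monoB m n : (m <= n)%N -> x (Jb m) <= x (Jb n).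
Proof. by move=> h; apply: hx.1.1. Qed.

Lemma stable_x : stableFrom x (dx x).
Proof.
have [s hs] := hx.1.2.
have [Na HA] := @stab (fun n => x (Ja n)) s monoA (fun n => hs _).
have [Nb HB] := @stab (fun n => x (Jb n)) s monoB (fun n => hs _).
have ex : exists d, stableFrom x d.
  exists (maxn Na Nb) => n hn.
  rewrite (ainf_char HA) (binf_char HB) HA ?HB //.
    exact: leq_trans (leq_maxr _ _) hn.
  exact: leq_trans (leq_maxl _ _) hn.
have ex2 := ex_min ex.
exact: (epsilon_spec (inhabits 0%N) _ ex2).1.
Qed.

Let a := ainf x.
Let b := binf x.
Let c := x Jc.
Let d := dx x.

Lemma xa_le n : x (Ja n) <= a.
Proof.
apply: le_trans (monoA (leq_maxl n d)) _.
by rewrite (stable_x (leq_maxr n d)).1.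
Qed.
Lemma xb_le n : x (Jb n) <= b.
Proof.
apply: le_trans (monoB (leq_maxl n d)) _.
by rewrite (stable_x (leq_maxr n d)).2.
Qed.

Lemma conds : b `&` c <= a /\ a `&` c <= b /\ a `&` b <= c.
Proof.
have := hx.2; rewrite /ell.
have -> : ainf (step x) = a `|` (b `&` c).
  apply: (@ainf_char _ d.+1) => -[//|m] hm /=.
  by rewrite (stable_x (ltnW hm)).1 (stable_x hm).2.
have -> : binf (step x) = b `|` (a `&` c).
  apply: (@binf_char _ d.+1) => -[//|m] hm /=.
  by rewrite (stable_x (ltnW hm)).2 (stable_x hm).1.
move=> [e1 e2 e3]; split; first by rewrite -[X in _ <= X]e1 leUr.
split; first by rewrite -[X in _ <= X]e2 leUr.
by rewrite -[X in _ <= X]e3 leUr.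
Qed.

Lemma inv k : iterx k x Jc = c /\
  (forall n, iterx k x (Ja n) <= a /\ iterx k x (Jb n) <= b) /\
  (forall n, (d <= n)%N -> iterx k x (Ja n) = a /\ iterx k x (Jb n) = b).
Proof.
have [hbc [hac habc]] := conds.
elim: k => [|k [IHc [IHb IHs]]].
  split=> //; split=> n; first by rewrite /= xa_le xb_le.
  exact: stable_x.
have -> : iterx k.+1 x = step (iterx k x) by [].
have ya : ainf (iterx k x) = a by apply: (@ainf_char _ d) => n hn; exact: (IHs n hn).1.
have yb : binf (iterx k x) = b by apply: (@binf_char _ d) => n hn; exact: (IHs n hn).2.
split; first by rewrite /= IHc ya yb join_l.
split.
  case=> [|m] /=; first exact: IHb.
  rewrite !leUx (IHb m.+1).1 (IHb m.+1).2 IHc /=.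
  by rewrite (le_trans _ hbc) ?(le_trans _ hac) // leI2 // ?(IHb m).1 ?(IHb m).2.
case=> [|m] hm /=; first exact: IHs.
rewrite (IHs _ hm).1 (IHs _ hm).2 IHc !join_l //.
  by rewrite (le_trans _ hac) // leI2 // (IHb m).1.
by rewrite (le_trans _ hbc) // leI2 // (IHb m).2.
Qed.

Lemma stepA y n : step y (Ja n.+1) = y (Ja n.+1) `|` (y (Jb n) `&` y Jc).
Proof. by []. Qed.
Lemma stepB y n : step y (Jb n.+1) = y (Jb n.+1) `|` (y (Ja n) `&` y Jc).
Proof. by []. Qed.

Lemma stabn n : forall k, (n <= k)%N ->
  iterx k.+1 x (Ja n) = iterx k x (Ja n) /\ iterx k.+1 x (Jb n) = iterx k x (Jb n).
Proof.
elim: n => [|m IH] k hk; first by [].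
case: k hk => [//|k] hk.
have [e1 e2] := IH k hk.
change (step (step (iterx k x)) (Ja m.+1) = step (iterx k x) (Ja m.+1) /\
        step (step (iterx k x)) (Jb m.+1) = step (iterx k x) (Jb m.+1)).
change (step (iterx k x) (Jb m) = iterx k x (Jb m)) in e2.
change (step (iterx k x) (Ja m) = iterx k x (Ja m)) in e1.
have c1 := (inv k.+1).1. have c0 := (inv k).1.
change (step (iterx k x) Jc = c) in c1.
rewrite (stepA (step _)) (stepB (step _)) e1 e2 c1 !stepA !stepB c0.
by rewrite -!joinA !joinxx.
Qed.

Lemma succ_eq k : (d <= k)%N -> iterx k.+1 x = iterx k x.
Proof.
move=> hk; apply: functional_extensionality => -[|n|n].
- by rewrite (inv k.+1).1 (inv k).1.
- case: (leqP d n) => hn.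
    by rewrite ((inv k.+1).2.2 _ hn).1 ((inv k).2.2 _ hn).1.
  exact: (stabn (leq_trans (ltnW hn) hk)).1.
- case: (leqP d n) => hn.
    by rewrite ((inv k.+1).2.2 _ hn).2 ((inv k).2.2 _ hn).2.
  exact: (stabn (leq_trans (ltnW hn) hk)).2.
Qed.

End Proofs.

Theorem corollary5p6 (disp : Order.disp_t) (L : bLatticeType disp) (h : nat)
  (hpos : (0 < h)%N) (hmod : @hmodular disp L h)
  (x : JK -> L) (hx : inA' x) (k : nat) (hk : (dx x <= k)%N) :
  iterx k x = iterx (dx x) x.
Proof.
elim: k hk => [|k IH] hk; first by move: hk; rewrite leqn0 => /eqP ->.
move: hk; rewrite leq_eqVlt => /orP [/eqP -> //| hk].
by rewrite (succ_eq hx hk) IH.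
Qed.
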